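(* Let $\nu\in\mathbb M$. The following are equivalent: (1) $\nu$ is ergodic with respect to $\mathbb S\times\mathbb O$; (2) for every $k\ge0$, $\theta_k[\nu]$ is ergodic with respect to $\mathbb S^{2^k}$; (3) there is $n\ge0$ such that $\theta_k[\nu]$ is ergodic with respect to $\mathbb S^{2^k}$ for every $k\ge n$.
   Context: $I=\{0,1\}$. $\mathbb S$ is the left shift on $I^{\mathbb Z}$; for a measure $\eta$, $\mathbb S^j\eta$ is the pushforward. $I^{\mathbb N}$ is the space of $0$–$1$ sequences $(\alpha_i)_{i\ge1}$ with uniform Bernoulli measure $m$; $\mathbb O$ is the odometer (addition of $1$ with carry to the right: if $\alpha_1=\dots=\alpha_{n-1}=1$, $\alpha_n=0$, then $\mathbb O[\alpha]_i=0$ for $i<n$, $\mathbb O[\alpha]_n=1$, $\mathbb O[\alpha]_i=\alpha_i$ for $i>n$). $\mathbb M$ is the set of Borel probability measures on $I^{\mathbb Z}\times I^{\mathbb N}$ invariant under $\mathbb S\times\mathbb O$. For $k\ge0$, $A_{0,k}=\{\alpha:\alpha_1=\dots=\alpha_k=0\}$, and $\theta_k[\nu]$ is the normalized projection to $I^{\mathbb Z}$ of the restriction of $\nu$ to $I^{\mathbb Z}\times A_{0,k}$; it is $\mathbb S^{2^k}$-invariant. *)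

(* Defs.v *)
From HB Require Import structures.
From mathcomp Require Import all_boot all_order all_algebra.
From mathcomp Require Import all_classical all_reals all_analysis.
Set Implicit Arguments. Unset Strict Implicit. Unset Printing Implicit Defensive.
Import Order.TTheory GRing.Theory Num.Theory.
Local Open Scope classical_set_scope.
Local Open Scope ring_scope.

(* I^Z : two-sided 0-1 sequences, indexed by int, true = 1 *)
Definition cylZ : set (set (int -> bool)) :=
  [set A | exists (i : int) (b : bool), A = [set x | x i = b]].
Definition IZ := g_sigma_algebraType cylZ.

(* I^N : one-sided 0-1 sequences (alpha_1, alpha_2, ...) stored as
   nat -> bool with alpha_(i+1) at index i *)
Definition cylN : set (set (nat -> bool)) :=
  [set A | exists (i : nat) (b : bool), A = [set x | x i = b]].
Definition IN := g_sigma_algebraType cylN.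

Definition shiftZ (x : IZ) : IZ := fun i => x (i + 1)%R.

(* the odometer: bit n flips iff all the lower bits are 1
   (this is addition of 1 with carry to the right; all-ones maps to all-zeros) *)
Definition odometer (a : IN) : IN :=
  fun n => if [forall i : 'I_n, a i] then ~~ a n else a n.

Definition SxO (p : (IZ * IN)%type) : (IZ * IN)%type := (shiftZ p.1, odometer p.2).

Definition invariant_for d (X : measurableType d) (R : realType)
  (mu : set X -> \bar R) (T : X -> X) : Prop :=
  forall A, measurable A -> mu (T @^-1` A) = mu A.

Definition ergodic_for d (X : measurableType d) (R : realType)
  (mu : set X -> \bar R) (T : X -> X) : Prop :=
  invariant_for mu T /\
  forall A, measurable A -> T @^-1` A = A -> (mu A = 0)%E \/ (mu A = 1)%E.

Definition in_M (R : realType) (nu : probability (IZ * IN)%type R) : Prop :=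
  invariant_for nu SxO.

Definition A0 (k : nat) : set IN := [set a | forall i, (i < k)%N -> a i = false].

Definition theta (R : realType) (nu : probability (IZ * IN)%type R) (k : nat)
  : set IZ -> \bar R :=
  fun A => ((fine (nu (A `*` A0 k)) / fine (nu (setT `*` A0 k)))%:E).

(* Main.v *)
Require Import Defs.
From HB Require Import structures.
From mathcomp Require Import all_boot all_order all_algebra.
From mathcomp Require Import all_classical all_reals all_analysis.
From mathcomp Require Import zify.

Module Aux.
Set Implicit Arguments. Unset Strict Implicit. Unset Printing Implicit Defensive.
Import Order.TTheory GRing.Theory Num.Theory.
Section file_A.
Local Open Scope classical_set_scope.
Local Open Scope ring_scope.

Definition rk (k : nat) (a : nat -> bool) : nat := (\sum_(i < k) a i * 2 ^ i)%N.

Lemma rkS k (a : nat -> bool) : rk k.+1 a = (rk k a + a k * 2 ^ k)%N.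
Proof. by rewrite /rk big_ord_recr. Qed.

Lemma rk_lt k (a : nat -> bool) : (rk k a < 2 ^ k)%N.
Proof.
elim: k => [|k IH]; first by rewrite /rk big_ord0.
rewrite rkS expnS; case: (a k) => /=; lia.
Qed.

Lemma rk_all k (a : nat -> bool) : [forall i : 'I_k, a i] = (rk k a == (2 ^ k).-1)%N.
Proof.
elim: k => [|k IH]; first by rewrite /rk big_ord0 expn0 eqxx; apply/forallP => -[].
have := rk_lt k a; rewrite rkS expnS => lt.
apply/forallP/idP.
- move=> H; have : [forall i : 'I_k, a i].
    by apply/forallP => i; have := H (widen_ord (leqnSn _) i).
  rewrite IH => /eqP E; have := H ord_max => /= E2; rewrite E E2; have := expn_gt0 2 k; lia.
- move=> Hs i; case: (ltngtP i k) => [ik||ie].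
  + have : [forall i : 'I_k, a i].
      rewrite IH; move: Hs lt; case: (a k) => /=; lia.
    by move/forallP => /(_ (Ordinal ik)).
  + by have := ltn_ord i; lia.
  + rewrite ie; move: Hs lt; case: (a k) => //=; lia.
Qed.

Lemma rk_odo k (a : nat -> bool) : rk k (odometer a) = ((rk k a).+1 %% 2 ^ k)%N.
Proof.
elim: k => [|k IH]; first by rewrite /rk !big_ord0 modn1.
rewrite !rkS IH {1}/odometer rk_all.
have := rk_lt k a.
case: eqP => [->|ne] lt.
- have -> : ((2 ^ k).-1.+1 = 2 ^ k)%N by rewrite prednK // expn_gt0.
  rewrite modnn expnS; case: (a k) => /=.
  + have -> : (((2 ^ k).-1 + 1 * 2 ^ k).+1 = 2 * 2 ^ k)%N by have := expn_gt0 2 k; lia.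
    by rewrite modnn.
  + rewrite modn_small; lia.
- rewrite modn_small; last lia.
  rewrite modn_small // expnS; case: (a k) => /=; lia.
Qed.

End file_A.
Section file_B.
Local Open Scope classical_set_scope.
Local Open Scope ring_scope.

Lemma cylN_meas (i : nat) (b : bool) : measurable ([set x : IN | x i = b]).
Proof. by apply: sub_sigma_algebra; exists i, b. Qed.

Lemma cylZ_meas (i : int) (b : bool) : measurable ([set x : IZ | x i = b]).
Proof. by apply: sub_sigma_algebra; exists i, b. Qed.

Definition preN (n : nat) (c : bool) : set IN :=
  [set a | forall i, (i < n)%N -> a i = c].

Lemma preN_meas n c : measurable (preN n c).
Proof.
have -> : preN n c = \bigcap_i (if (i < n)%N then [set a : IN | a i = c] else setT).
  apply/seteqP; split => a /=.
  - by move=> H i _; case: ifP => // /H.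
  - by move=> H i lt; have := H i I; rewrite lt.
apply: bigcapT_measurable => i; case: ifP => _; [exact: cylN_meas|exact: measurableT].
Qed.

Lemma A0_meas k : measurable (A0 k).
Proof. exact: preN_meas. Qed.

Lemma shiftZ_meas : measurable_fun setT shiftZ.
Proof.
apply: (@measurability _ _ IZ IZ setT shiftZ cylZ erefl).
move=> _ [_ [i [b ->]] <-]; rewrite setTI.
have -> : shiftZ @^-1` [set x | x i = b] = [set x : IZ | x (i + 1)%R = b] by [].
exact: cylZ_meas.
Qed.

Lemma odometer_meas : measurable_fun setT odometer.
Proof.
apply: (@measurability _ _ IN IN setT odometer cylN erefl).
move=> _ [_ [n [b ->]] <-]; rewrite setTI.
have -> : odometer @^-1` [set x | x n = b] =
   (preN n true `&` [set a | a n = ~~ b]) `|` (~` preN n true `&` [set a | a n = b]).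
  apply/seteqP; split => a; rewrite /odometer /preN /=.
  - case: forallP => H.
    + by move=> <-; left; split; [move=> i lt; exact: (H (Ordinal lt))|rewrite negbK].
    + move=> ->; right; split => // H2; apply: H => i; exact: H2.
  - case: forallP => H.
    + case => -[H1 H2]; first by rewrite H2 negbK.
      by exfalso; apply: H1 => i lt; exact: (H (Ordinal lt)).
    + case => -[H1 H2] //; exfalso; apply: H => i; exact: H1.
apply: measurableU; apply: measurableI; try exact: cylN_meas.
- exact: preN_meas.
- apply: measurableC; exact: preN_meas.
Qed.

Lemma SxO_meas : measurable_fun setT SxO.
Proof.
apply: measurable_fun_pair.
- exact: measurableT_comp shiftZ_meas measurable_fst.
- exact: measurableT_comp odometer_meas measurable_snd.
Qed.

End file_B.
Section file_C.
Local Open Scope classical_set_scope.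
Local Open Scope ring_scope.

Lemma A0_rk k a : A0 k a <-> rk k a = 0%N.
Proof.
elim: k => [|k IH]; first by rewrite /rk big_ord0; split => // _ i.
rewrite rkS; split.
- move=> H; have : A0 k a by move=> i lt; apply: H; lia.
  by rewrite IH => ->; rewrite (H k (ltnSn k)).
- case E: (a k) => /=; first by have := expn_gt0 2 k; lia.
  rewrite mul0n addn0 -IH => H i; rewrite ltnS leq_eqVlt => /orP[/eqP ->//|].
  exact: H.
Qed.

Lemma rk_iter k j a : rk k (iter j odometer a) = ((rk k a + j) %% 2 ^ k)%N.
Proof.
elim: j => [|j IH] /=; first by rewrite addn0 modn_small // rk_lt.
by rewrite rk_odo IH -addn1 modnDml addn1 addnS.
Qed.

Lemma A0_iter k j a : A0 k (iter j odometer a) <-> ((rk k a + j) %% 2 ^ k = 0)%N.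
Proof. by rewrite A0_rk rk_iter. Qed.

Lemma A0_iter2k k a : A0 k (iter (2 ^ k) odometer a) <-> A0 k a.
Proof. by rewrite A0_iter modnDr modn_small ?rk_lt // -A0_rk. Qed.

Lemma iter_SxO j p : iter j SxO p = (iter j shiftZ p.1, iter j odometer p.2).
Proof. by elim: j => [|j IH] /=; [case: p|rewrite IH]. Qed.

Lemma iter_meas d (X : measurableType d) (f : X -> X) j :
  measurable_fun setT f -> measurable_fun setT (iter j f).
Proof.
move=> mf; elim: j => [|j IH] /=; first exact: measurable_id.
exact: measurableT_comp mf IH.
Qed.

Lemma inv_iter d (X : measurableType d) (R : realType) (mu : set X -> \bar R) f :
  measurable_fun setT f -> invariant_for mu f -> forall j, invariant_for mu (iter j f).
Proof.
move=> mf hf; elim => [|j IH] A mA //=.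
have mfA : measurable (f @^-1` A) by have := mf measurableT A mA; rewrite setTI.
have -> : iter j.+1 f @^-1` A = iter j f @^-1` (f @^-1` A) by [].
by rewrite IH // hf.
Qed.

Lemma theta_eq0 (R : realType) (nu : probability (IZ * IN)%type R) k A :
  nu (A `*` A0 k) = 0%E -> theta nu k A = 0%E.
Proof. rewrite /theta => ->. by rewrite /= mul0r. Qed.
Lemma theta_eq1 (R : realType) (nu : probability (IZ * IN)%type R) k A :
  nu (A `*` A0 k) = nu (setT `*` A0 k) -> theta nu k A = 0%E \/ theta nu k A = 1%E.
Proof. rewrite /theta => ->.
case: (eqVneq (fine (nu (setT `*` A0 k))) 0) => [->|nz].
  + by left; rewrite mul0r.
  + by right; rewrite divff.
Qed.

Section main.
Variables (R : realType) (nu : probability (IZ * IN)%type R).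
Hypothesis hnu : in_M nu.

Lemma nuT j : invariant_for nu (iter j SxO).
Proof. exact: inv_iter SxO_meas hnu j. Qed.

Lemma theta_inv k : invariant_for (theta nu k) (iter (2 ^ k) shiftZ).
Proof.
move=> A mA; rewrite /theta.
have -> : (iter (2 ^ k) shiftZ @^-1` A) `*` A0 k = iter (2 ^ k) SxO @^-1` (A `*` A0 k).
  apply/seteqP; split => -[x a]; rewrite /= iter_SxO /= A0_iter2k //.
by rewrite nuT //; apply: measurableX => //; exact: A0_meas.
Qed.

Lemma erg12 : ergodic_for nu SxO -> forall k, ergodic_for (theta nu k) (iter (2 ^ k) shiftZ).
Proof.
move=> [_ herg] k; split; first exact: theta_inv.
move=> B mB hB.
pose R0 := B `*` A0 k.
pose E := \bigcup_j (if (j < 2 ^ k)%N then iter j SxO @^-1` R0 else set0).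
have mR0 : measurable R0 := measurableX mB (A0_meas k).
have mE : measurable E.
  apply: bigcupT_measurable => j; case: ifP => _; last exact: measurable0.
  by have := iter_meas j SxO_meas measurableT mR0; rewrite setTI.
have Rinv p : R0 (iter (2 ^ k) SxO p) <-> R0 p.
  case: p => x a; rewrite iter_SxO /R0 /= A0_iter2k.
  by rewrite -{2}hB.
have k0 : (0 < 2 ^ k)%N by rewrite expn_gt0.
have Einv : SxO @^-1` E = E.
  apply/seteqP; split => p /=.
  - move=> [j _]; case: ifP => // jlt; rewrite /= -iterSr => h.
    case: (ltngtP j.+1 (2 ^ k)) => [lt|gt|eq].
    + by exists j.+1 => //; rewrite lt.
    + lia.
    + by exists 0%N => //; rewrite k0 /=; apply/Rinv; rewrite -eq.
  - move=> [j _]; case: ifP => // jlt h; case: j jlt h => [|j] jlt h.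
    + exists (2 ^ k).-1 => //; rewrite ifT; last lia.
      by rewrite /= -iterSr prednK //; apply/Rinv.
    + by exists j => //; rewrite ifT; [rewrite /= -iterSr|lia].
have ER : E `&` (setT `*` A0 k) = R0.
  apply/seteqP; split.
  - move=> [x a] [[j _]]; case: ifP => // jlt; rewrite /= iter_SxO /R0 /= => -[hB' hA] [_ ha].
    have j0 : j = 0%N.
      move: hA; rewrite A0_iter; move: ha; rewrite A0_rk => ->.
      by rewrite add0n modn_small.
    by subst j.
  - move=> [x a] [hb ha]; split => //; by exists 0%N => //; rewrite k0 /=.
have mX : measurable (setT `*` A0 k : set (IZ * IN)) := measurableX measurableT (A0_meas k).
case: (herg E mE Einv) => nuE.
- left; apply: theta_eq0.
  apply: subset_measure0 nuE => //; rewrite -/R0 -ER; exact: subIsetl.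
- apply: theta_eq1.
  rewrite (measureDI nu mX mE) setIC ER.
  rewrite [X in (X + _)%E](_ : _ = 0%E); first by rewrite add0e.
    apply: (@subset_measure0 _ _ _ nu _ (~` E));
      try exact: measurableD; try exact: measurableC; try (by move=> p []).
    have h := probability_setC nu mE.
    apply: (eq_trans h); by rewrite nuE subee.
Qed.

End main.

End file_C.
Section file_D.
Local Open Scope classical_set_scope.
Local Open Scope ereal_scope.
Local Open Scope charge_scope.

Section key.
Context d (X : measurableType d) (R : realType).
Variable (U V : X -> X).
Hypotheses (mU : measurable_fun setT U) (mV : measurable_fun setT V).
Hypotheses (UV : forall x, U (V x) = x) (VU : forall x, V (U x) = x).

Lemma mpre (f : X -> X) A : measurable_fun setT f -> measurable A -> measurable (f @^-1` A).
Proof. by move=> mf mA; have := mf measurableT A mA; rewrite setTI. Qed.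

Lemma miter j : measurable_fun setT (iter j U).
Proof.
elim: j => [|j IH] /=; first exact: measurable_id.
exact: measurableT_comp mU IH.
Qed.

Variable s : charge X R.
Hypothesis sinv : forall A, measurable A -> s (U @^-1` A) = s A.

Lemma sinv_iter j A : measurable A -> s (iter j U @^-1` A) = s A.
Proof.
elim: j A => [|j IH] A mA //=.
have -> : iter j.+1 U @^-1` A = iter j U @^-1` (U @^-1` A) by [].
by rewrite IH ?sinv //; exact: mpre.
Qed.

Lemma pos_shift P : s.-positive_set P -> s.-positive_set (U @^-1` P).
Proof.
move=> [mP hP]; split; first exact: mpre.
move=> A mA AP.
have -> : A = U @^-1` (V @^-1` A) by apply/seteqP; split => x /=; rewrite VU.
rewrite sinv; last exact: mpre.
apply: hP; first exact: mpre.
by move=> y /= Ay; have := AP _ Ay; rewrite /= UV.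
Qed.

Lemma pos_iter j P : s.-positive_set P -> s.-positive_set (iter j U @^-1` P).
Proof.
elim: j P => [|j IH] P hP //=.
have -> : iter j.+1 U @^-1` P = iter j U @^-1` (U @^-1` P) by [].
by apply: IH; exact: pos_shift.
Qed.

Lemma pos_sub P A : s.-positive_set P -> measurable A -> A `<=` P -> s.-positive_set A.
Proof. by move=> [mP hP] mA AP; split => // B mB BA; apply: hP => //; exact: subset_trans AP. Qed.

Lemma pos_bigcup (F : (set X)^nat) : (forall i, s.-positive_set (F i)) ->
  s.-positive_set (\bigcup_i F i).
Proof.
move=> hF.
have : (copp s).-negative_set (\bigcup_i F i).
  apply: bigcup_negative_set => i; have [mF hFi] := hF i; split => // A mA AF.
  by rewrite /copp /= oppe_le0; exact: hFi.
move=> [mU' hU]; split => // A mA AF.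
by have := hU A mA AF; rewrite /copp /= oppe_le0.
Qed.

Lemma addx_eq (x a : \bar R) : x \is a fin_num -> a + x = x -> a = 0.
Proof. by move=> fx h; have := congr1 (fun y => y - x) h; rewrite addeK // subee. Qed.

Hypothesis herg : forall A, measurable A -> U @^-1` A = A -> s A = 0.

Section hahn.
Variables P N : set X.
Hypothesis hPN : hahn_decomposition s P N.

Lemma sup_le A : measurable A -> s A <= s P.
Proof.
move: hPN => [[mP hP] [mN hN] PNT PN0] mA.
rewrite (charge_partition s mA mP mN PNT PN0).
apply: (@le_trans _ _ (s (A `&` P))).
  by apply: geeDl; apply: hN; [exact: measurableI|exact: subIsetr].
rewrite [leRHS](chargeDI s mP mA) setIC; apply: leeDr.
by apply: hP; [exact: measurableD|exact: subDsetl].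
Qed.

Lemma hahn_pos0 : s P = 0.
Proof.
have [[mP hP] _ _ _] := hPN.
have posP : s.-positive_set P by [].
pose Q m := \bigcup_j (iter (j + m) U @^-1` P).
have posQ m : s.-positive_set (Q m).
  by apply: pos_bigcup => j; exact: pos_iter.
have mQ m : measurable (Q m) by have [] := posQ m.
have QS m : Q m.+1 `<=` Q m.
  by move=> x [j _ h]; exists j.+1 => //; rewrite addSnnS.
have sQ m : s (Q m) = s P.
  apply/eqP; rewrite eq_le sup_le //=.
  have mI : measurable (iter m U @^-1` P) by exact: mpre (miter m) mP.
  rewrite -(sinv_iter m mP) (chargeDI s (mQ m) mI).
  have -> : Q m `&` iter m U @^-1` P = iter m U @^-1` P.
    by apply/setIidr => x h; exists 0%N.
  apply: leeDr; have [_ hQ] := posQ m; apply: hQ; [exact: measurableD|exact: subDsetl].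
pose P' := \bigcap_m Q m.
have mP' : measurable P' by exact: bigcapT_measurable.
have P'inv : U @^-1` P' = P'.
  apply/seteqP; split => x /= h m _.
  - have := h m I; case=> j _; rewrite /= -iterSr => hx.
    by exists j.+1 => //; rewrite addSnnS.
  - have := h m.+1 I; case=> j _; rewrite /= => hx.
    by exists j => //; rewrite /= -iterSr -addnS.
pose D m := Q m `\` Q m.+1.
have mD m : measurable (D m) by exact: measurableD.
have negD m : s.-negative_set (D m).
  split => // A mA AD.
  have sD0 : s (D m) = 0.
    apply: (@addx_eq (s (Q m.+1))); first exact: fin_num_measure.
    rewrite [in RHS]sQ -(sQ m) (chargeDI s (mQ m) (mQ m.+1)).
    by congr (_ + s _); apply/esym/setIidr.
  have [_ hQ] := posQ m.
  have : s (D m `\` A) + s (D m `&` A) = 0 by rewrite -chargeDI.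
  have -> : D m `&` A = A by apply/setIidr.
  move=> h; rewrite -h; apply: leeDr.
  by apply: hQ; [exact: measurableD|move=> x [[]]].
have negU : s.-negative_set (\bigcup_m D m) by exact: bigcup_negative_set.
have sub : Q 0%N `\` P' `<=` \bigcup_m D m.
  move=> x [xQ xP'].
  have : exists m, ~ Q m x.
    by apply/existsNP => H; apply: xP' => m _; exact: H.
  case=> m; elim: m => [|m IH] xm; first by [].
  case: (pselect (Q m x)) => Qm; first by exists m.
  exact: IH.
have mQP : measurable (Q 0%N `\` P') by exact: measurableD.
have s0 : s (Q 0%N `\` P') = 0.
  apply/eqP; rewrite eq_le; apply/andP; split.
  - by have [_ hN] := negU; exact: hN.
  - by have [_ hQ] := posQ 0%N; apply: hQ => // x [].
have sP' : s P' = s P.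
  rewrite -(sQ 0%N) (chargeDI s (mQ 0%N) mP') s0 add0e.
  by congr (s _); apply/esym/setIidr => x h; exact: h 0%N I.
by rewrite -sP' herg.
Qed.

End hahn.
End key.

Lemma charge_zero d (X : measurableType d) (R : realType) (U V : X -> X)
  (mU : measurable_fun setT U) (mV : measurable_fun setT V)
  (UV : forall x, U (V x) = x) (VU : forall x, V (U x) = x)
  (s : charge X R)
  (sinv : forall A, measurable A -> s (U @^-1` A) = s A)
  (herg : forall A, measurable A -> U @^-1` A = A -> s A = 0) :
  forall A, measurable A -> s A = 0.
Proof.
move=> A mA.
have [P [N hPN]] := Hahn_decomposition s.
have [P2 [N2 hPN2]] := Hahn_decomposition (copp s).
have h1 := hahn_pos0 mU mV UV VU sinv herg hPN.
have h2 : - s P2 = 0.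
  change (copp s P2 = 0).
  apply: (hahn_pos0 mU mV UV VU) hPN2.
  - by move=> B mB; change (- s (U @^-1` B) = - s B); rewrite sinv.
  - by move=> B mB hB; change (- s B = 0); rewrite herg // oppe0.
have h3 := sup_le hPN2 mA.
change (is_true (- s A <= - s P2)) in h3; rewrite h2 oppe_le0 in h3.
apply/eqP; rewrite eq_le h3 andbT -h1; exact: (sup_le hPN).
Qed.

End file_D.
Section file_E.
Local Open Scope classical_set_scope.
Local Open Scope ring_scope.

Definition Cs k r : set IN := [set a | rk k a = r].

Lemma A0_Cs k : A0 k = Cs k 0.
Proof. by apply/seteqP; split => a /=; rewrite A0_rk. Qed.

Lemma Cs_iter k r a : (r < 2 ^ k)%N ->
  (Cs k r a <-> A0 k (iter (2 ^ k - r) odometer a)).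
Proof.
move=> rlt; rewrite A0_iter /Cs /=; have := rk_lt k a.
move: (rk k a) => m mlt; split => [->|].
- by rewrite subnKC ?modnn // ltnW.
- case: (ltngtP m r) => [lt|gt|->] //.
  + rewrite modn_small; lia.
  + have -> : (m + (2 ^ k - r) = (m - r) + 2 ^ k)%N by lia.
    rewrite modnDr modn_small; lia.
Qed.

Lemma Cs_meas k r : measurable (Cs k r).
Proof.
case: (ltnP r (2 ^ k)) => h.
- have -> : Cs k r = iter (2 ^ k - r) odometer @^-1` A0 k.
    by apply/seteqP; split => a /=; rewrite Cs_iter.
  have := iter_meas (2 ^ k - r) odometer_meas measurableT (A0_meas k).
  by rewrite setTI.
- have -> : Cs k r = set0.
    apply/seteqP; split => a //=; rewrite /Cs /= => E.
    by have := rk_lt k a; rewrite E; lia.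
  exact: measurable0.
Qed.

Lemma Cs_split k r a : (r < 2 ^ k)%N ->
  Cs k r a <-> (Cs k.+1 r a \/ Cs k.+1 (r + 2 ^ k) a).
Proof.
move=> rlt; rewrite /Cs /= rkS; have := rk_lt k a.
case: (a k) => /= lt; split.
- by move=> ->; right; rewrite mul1n.
- rewrite mul1n; case=> h; lia.
- by move=> ->; left; rewrite mul0n addn0.
- rewrite mul0n addn0; case=> h //; lia.
Qed.

Lemma rk_mod k m a : rk k a = (rk (k + m) a %% 2 ^ k)%N.
Proof.
elim: m => [|m IH]; first by rewrite addn0 modn_small // rk_lt.
rewrite addnS rkS IH -modnDml.
have -> : (a (k + m) * 2 ^ (k + m) = (a (k + m) * 2 ^ m) * 2 ^ k)%N.
  by rewrite expnD -mulnA (mulnC (2 ^ k)%N).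
by rewrite modnDml -modnDmr modnMl addn0.
Qed.

Lemma rk_bit i m a : (i < m)%N -> a i = odd (rk m a %/ 2 ^ i).
Proof.
move=> /subnKC <-; move: (m - i.+1)%N => p.
elim: p => [|p IH].
- rewrite addn0 rkS addnC divnMDl ?expn_gt0 // divn_small ?rk_lt // addn0.
  by case: (a i).
- rewrite addnS rkS.
  have -> : (a (i.+1 + p) * 2 ^ (i.+1 + p) = (a (i.+1 + p) * 2 ^ p.+1) * 2 ^ i)%N.
    by rewrite -mulnA -expnD addSnnS addnC.
  rewrite addnC divnMDl ?expn_gt0 // oddD oddM oddX /= andbF /=.
  exact: IH.
Qed.

Definition shiftZinv (x : IZ) : IZ := fun i => x (i - 1)%R.

Lemma shiftZinv_meas : measurable_fun setT shiftZinv.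
Proof.
apply: (@measurability _ _ IZ IZ setT shiftZinv cylZ erefl).
move=> _ [_ [i [b ->]] <-]; rewrite setTI.
have -> : shiftZinv @^-1` [set x | x i = b] = [set x : IZ | x (i - 1)%R = b] by [].
exact: cylZ_meas.
Qed.

Lemma shiftZK x : shiftZ (shiftZinv x) = x.
Proof. by apply/funext => i; rewrite /shiftZ /shiftZinv addrK. Qed.

Lemma shiftZinvK x : shiftZinv (shiftZ x) = x.
Proof. by apply/funext => i; rewrite /shiftZ /shiftZinv subrK. Qed.

Lemma iter_cancel (X : Type) (f g : X -> X) : (forall x, f (g x) = x) ->
  forall j x, iter j f (iter j g x) = x.
Proof.
move=> fg; elim => [|j IH] x //=.
by rewrite -iterS iterSr fg IH.
Qed.

End file_E.
Section file_F.
Local Open Scope classical_set_scope.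
Local Open Scope ring_scope.

Definition muD (R : realType) (nu : probability (IZ * IN)%type R)
  (D : set (IZ * IN)) (mD : measurable D) : set IZ -> \bar R :=
  fun A => nu ((A `*` setT) `&` D).

Section muD.
Variables (R : realType) (nu : probability (IZ * IN)%type R).
Variables (D : set (IZ * IN)) (mD : measurable D).
Local Notation muD := (muD nu mD).

Let muD0 : muD set0 = 0%E.
Proof. by rewrite /muD set0X set0I measure0. Qed.

Let muD_finite A : measurable A -> muD A \is a fin_num.
Proof. by move=> mA; rewrite /muD fin_num_measure //; apply: measurableI => //; exact: measurableX. Qed.

Let muD_sigma : semi_sigma_additive muD.
Proof.
move=> F mF tF mUF; rewrite /muD.
have -> : (\bigcup_i F i) `*` setT `&` D = \bigcup_i ((F i `*` setT) `&` D).
  apply/seteqP; split => -[x y] /=.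
  - by move=> [[[i _ h] _] hD]; exists i.
  - by move=> [i _ [[h _] hD]]; split => //; split => //; exists i.
apply: measure_semi_sigma_additive.
- by move=> i; apply: measurableI => //; exact: measurableX.
- apply/trivIsetP => i j _ _ ij; move/trivIsetP: tF => /(_ i j I I ij) h.
  apply/seteqP; split => -[x y] //= [[[h1 _] _] [[h2 _] _]].
  by have : (F i `&` F j) x by []; rewrite h.
- apply: bigcupT_measurable => i; apply: measurableI => //; exact: measurableX.
Qed.

HB.instance Definition _ := isCharge.Build _ _ _ muD muD0 muD_finite muD_sigma.
End muD.

Section pos.
Variables (R : realType) (nu : probability (IZ * IN)%type R).
Hypothesis hnu : in_M nu.

Lemma X0_half k : nu (setT `*` A0 k) = (nu (setT `*` A0 k.+1) + nu (setT `*` A0 k.+1))%E.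
Proof.
have k0 : (0 < 2 ^ k)%N by rewrite expn_gt0.
have e1 : setT `*` A0 k = (setT `*` A0 k.+1) `|` (setT `*` Cs k.+1 (2 ^ k)) :> set (IZ * IN).
  apply/seteqP; split => -[x a] /=; rewrite !A0_Cs.
  - by move=> [_] /(Cs_split a k0); rewrite add0n; case; [left|right].
  - by case=> -[_ h]; split => //; apply/(Cs_split a k0); rewrite add0n; [left|right].
have e2 : setT `*` Cs k.+1 (2 ^ k) = iter (2 ^ k.+1 - 2 ^ k) SxO @^-1` (setT `*` A0 k.+1)
    :> set (IZ * IN).
  apply/seteqP; split => -[x a] /=; rewrite iter_SxO /= -Cs_iter //;
    rewrite expnS; lia.
rewrite e1 measureU.
- congr (_ + _)%E; rewrite e2; apply: (nuT hnu); apply: measurableX => //; exact: A0_meas.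
- by apply: measurableX => //; exact: A0_meas.
- by apply: measurableX => //; exact: Cs_meas.
- apply/seteqP; split => -[x a] //= [[_ h1] [_ h2]]; move: h1; rewrite A0_rk.
  by rewrite /Cs /= in h2; rewrite h2; have := expn_gt0 2 k; lia.
Qed.

Lemma X0_neq0 k : nu (setT `*` A0 k) != 0%E.
Proof.
elim: k => [|k IH].
  have -> : setT `*` A0 0 = setT :> set (IZ * IN).
    by apply/seteqP; split => -[x a] //= _; split => // i.
  by rewrite probability_setT.
apply: contraNN IH => /eqP h; by rewrite X0_half h adde0.
Qed.

Lemma X0_pos k : (0 < fine (nu (setT `*` A0 k)))%R.
Proof.
apply: fine_gt0; rewrite lt0e X0_neq0 measure_ge0 /=.
by rewrite ltey_eq fin_num_measure //; apply: measurableX => //; exact: A0_meas.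
Qed.
End pos.

End file_F.
Section file_G.
Local Open Scope classical_set_scope.
Local Open Scope ring_scope.

Section erg31.
Variables (R : realType) (nu : probability (IZ * IN)%type R).
Hypothesis hnu : in_M nu.
Variable n : nat.
Hypothesis Herg : forall k, (n <= k)%N -> ergodic_for (theta nu k) (iter (2 ^ k) shiftZ).
Variable E : set (IZ * IN).
Hypotheses (mE : measurable E) (Einv : SxO @^-1` E = E).

Lemma Einv_iter j : iter j SxO @^-1` E = E.
Proof.
elim: j => [|j IH] //=.
have -> : iter j.+1 SxO @^-1` E = iter j SxO @^-1` (SxO @^-1` E) by [].
by rewrite Einv.
Qed.

Definition xk k := fine (nu (setT `*` A0 k)).
Definition ck k := fine (nu ((setT `*` A0 k) `&` E)) / xk k.

Lemma mX A B : measurable A -> measurable B -> measurable (A `*` B : set (IZ * IN)).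
Proof. exact: measurableX. Qed.

Lemma finnu (Y : set (IZ * IN)) : measurable Y -> nu Y \is a fin_num.
Proof. exact: fin_num_measure. Qed.

Lemma fine_le_nu (Y Z : set (IZ * IN)) : measurable Y -> measurable Z -> Y `<=` Z ->
  (fine (nu Y) <= fine (nu Z))%R.
Proof.
move=> mY mZ YZ; apply: fine_le; try exact: finnu.
by apply: le_measure => //; rewrite inE.
Qed.

Lemma fine_nuU (Y Z : set (IZ * IN)) : measurable Y -> measurable Z -> Y `&` Z = set0 ->
  fine (nu (Y `|` Z)) = (fine (nu Y) + fine (nu Z))%R.
Proof. by move=> mY mZ YZ; rewrite measureU // fineD // finnu. Qed.

Lemma propA k : (n <= k)%N -> forall A, measurable A ->
  fine (nu ((A `*` A0 k) `&` E)) = ck k * fine (nu (A `*` A0 k)).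
Proof.
move=> nk.
have mA0 := A0_meas k.
have mD0 : measurable (setT `*` A0 k : set (IZ * IN)) by exact: mX.
have mD1 : measurable ((setT `*` A0 k) `&` E : set (IZ * IN)) by exact: measurableI.
pose s : charge IZ R := cadd (muD nu mD1) (cscale (- ck k) (muD nu mD0)).
have sE A : measurable A ->
    s A = ((fine (nu ((A `*` A0 k) `&` E)) - ck k * fine (nu (A `*` A0 k)))%:E).
  move=> mA.
  have e1 : s A = (nu ((A `*` setT) `&` ((setT `*` A0 k) `&` E)) +
     (- ck k)%:E * nu ((A `*` setT) `&` (setT `*` A0 k)))%E by [].
  have mAE : measurable ((A `*` A0 k) `&` E : set (IZ * IN)).
    by apply: measurableI => //; exact: mX.
  have e2 : ((fine (nu ((A `*` A0 k) `&` E)) - ck k * fine (nu (A `*` A0 k)))%:E) =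
     (nu ((A `*` A0 k) `&` E) + (- ck k)%:E * nu (A `*` A0 k))%E.
    rewrite -(fineK (finnu mAE)) -[X in (_ + _ * X)%E](fineK (finnu (mX mA mA0))).
    by rewrite -EFinM -EFinD mulNr !fineK // ?finnu //; exact: mX.
  rewrite e1 e2; congr (nu _ + _ * nu _)%E; apply/seteqP; split => -[x a] /=; tauto.
pose U := iter (2 ^ k) shiftZ; pose V := iter (2 ^ k) shiftZinv.
have mU : measurable_fun setT U := iter_meas _ shiftZ_meas.
have mV : measurable_fun setT V := iter_meas _ shiftZinv_meas.
have UV x : U (V x) = x := iter_cancel shiftZK _ x.
have VU x : V (U x) = x := iter_cancel shiftZinvK _ x.
have sinv A : measurable A -> s (U @^-1` A) = s A.
  move=> mA; have mUA : measurable (U @^-1` A) by exact: mpre.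
  have h1 : nu ((U @^-1` A) `*` A0 k) = nu (A `*` A0 k).
    have -> : (U @^-1` A) `*` A0 k = iter (2 ^ k) SxO @^-1` (A `*` A0 k).
      by apply/seteqP; split => -[x a]; rewrite /= iter_SxO /= A0_iter2k.
    by apply: (nuT hnu); exact: mX.
  have h2 : nu (((U @^-1` A) `*` A0 k) `&` E) = nu ((A `*` A0 k) `&` E).
    have -> : ((U @^-1` A) `*` A0 k) `&` E = iter (2 ^ k) SxO @^-1` ((A `*` A0 k) `&` E).
      have hE p : E (iter (2 ^ k) SxO p) <-> E p by rewrite -{2}(Einv_iter (2 ^ k)).
      apply/seteqP; split => -[x a] /=.
      + move=> [[g1 g2] g3]; split; last exact/hE.
        by rewrite iter_SxO /= A0_iter2k.
      + rewrite iter_SxO /= A0_iter2k => -[[g1 g2] g3]; split => //.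
        by apply/hE; rewrite iter_SxO.
    by apply: (nuT hnu); apply: measurableI => //; exact: mX.
  by rewrite !sE // h1 h2.
have herg A : measurable A -> U @^-1` A = A -> s A = 0%E.
  move=> mA hA; rewrite sE //.
  have xpos := X0_pos hnu k.
  have mAE : measurable ((A `*` A0 k) `&` E : set (IZ * IN)).
    by apply: measurableI => //; exact: mX.
  have := (Herg nk).2 A mA hA; rewrite /theta.
  move=> [/eqP|/eqP]; rewrite eqe => /eqP hth.
  - have fa0 : fine (nu (A `*` A0 k)) = 0.
      move/eqP: hth; rewrite mulf_eq0 invr_eq0 => /orP[/eqP //|].
      by rewrite gt_eqF.
    have e0 : fine (nu ((A `*` A0 k) `&` E)) = 0.
      apply/eqP; rewrite eq_le; apply/andP; split.
      + rewrite -fa0; apply: fine_le_nu; try exact: mX; try exact: mAE; try exact: mAcE; exact: subIsetl.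
      + by apply: fine_ge0; exact: measure_ge0.
    by rewrite fa0 e0 mulr0 subr0.
  - have fa : fine (nu (A `*` A0 k)) = xk k.
      by rewrite -[LHS](divfK (x := xk k)) ?hth ?mul1r // gt_eqF.
    rewrite fa /ck divfK ?gt_eqF //.
    have mAc : measurable (~` A) by exact: measurableC.
    have dj1 : (A `*` A0 k) `&` (~` A `*` A0 k) = set0.
      by apply/seteqP; split => -[x a] //= [[h1 _] [h2 _]].
    have eX : setT `*` A0 k = (A `*` A0 k) `|` (~` A `*` A0 k) :> set (IZ * IN).
      apply/seteqP; split => -[x a] /=; last by case=> -[].
      by move=> [_ h]; case: (pselect (A x)) => hx; [left|right].
    have ec : fine (nu (~` A `*` A0 k)) = 0.
      have := fine_nuU (mX mA mA0) (mX mAc mA0) dj1; rewrite -eX -/(xk k) -fa.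
      by move=> h; apply: (addrI (fine (nu (A `*` A0 k)))); rewrite addr0 -h.
    have eXE : (setT `*` A0 k) `&` E = ((A `*` A0 k) `&` E) `|` ((~` A `*` A0 k) `&` E).
      by rewrite eX setIUl.
    have mAcE : measurable ((~` A `*` A0 k) `&` E : set (IZ * IN)).
      by apply: measurableI => //; exact: mX.
    rewrite eXE fine_nuU //; last first.
      by apply/seteqP; split => -[x a] //= [[[h1 _] _] [[h2 _] _]].
    have -> : fine (nu ((~` A `*` A0 k) `&` E)) = 0.
      apply/eqP; rewrite eq_le; apply/andP; split.
      + rewrite -ec; apply: fine_le_nu; try exact: mX; try exact: mAE; try exact: mAcE; exact: subIsetl.
      + by apply: fine_ge0; exact: measure_ge0.
    by rewrite addr0 subrr.
move=> A mA; have := charge_zero mU mV UV VU sinv herg mA.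
by rewrite sE // => /eqP; rewrite eqe subr_eq0 => /eqP.
Qed.


Lemma Cs_big k r : (2 ^ k <= r)%N -> Cs k r = set0.
Proof.
move=> h; apply/seteqP; split => a //=; rewrite /Cs /= => e.
by have := rk_lt k a; rewrite e; lia.
Qed.

Lemma propC k r A : (n <= k)%N -> measurable A ->
  fine (nu ((A `*` Cs k r) `&` E)) = ck k * fine (nu (A `*` Cs k r)).
Proof.
move=> nk mA; case: (ltnP r (2 ^ k)) => rlt; last first.
  by rewrite Cs_big // setX0 set0I measure0 /= mulr0.
pose j := (2 ^ k - r)%N.
pose A' := iter j shiftZinv @^-1` A.
have mA' : measurable A' by exact: mpre (iter_meas _ shiftZinv_meas) mA.
have hA x : A' (iter j shiftZ x) <-> A x by rewrite /A' /= iter_cancel // => y; exact: shiftZinvK.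
have e1 : A `*` Cs k r = iter j SxO @^-1` (A' `*` A0 k).
  apply/seteqP; split => -[x a]; rewrite /= iter_SxO /= -(Cs_iter _ rlt) hA //.
have e2 : (A `*` Cs k r) `&` E = iter j SxO @^-1` ((A' `*` A0 k) `&` E).
  have hE p : E (iter j SxO p) <-> E p by rewrite -{2}(Einv_iter j).
  apply/seteqP; split => -[x a] /=.
  + move=> [[g1 g2] g3]; split; last exact/hE.
    by rewrite iter_SxO /= -(Cs_iter _ rlt) hA.
  + rewrite iter_SxO /= -(Cs_iter _ rlt) hA => -[[g1 g2] g3]; split => //.
    by apply/hE; rewrite iter_SxO.
have mA'0 : measurable (A' `*` A0 k : set (IZ * IN)) by apply: mX => //; exact: A0_meas.
rewrite e2 e1 (nuT hnu j mA'0) (nuT hnu j (measurableI _ _ mA'0 mE)).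
exact: propA.
Qed.

Lemma ck_succ k : (n <= k)%N -> ck k.+1 = ck k.
Proof.
move=> nk.
have k0 : (0 < 2 ^ k)%N by rewrite expn_gt0.
have xpos := X0_pos hnu k.
have mB1 : measurable (setT `*` A0 k.+1 : set (IZ * IN)) by apply: mX => //; exact: A0_meas.
have mB2 : measurable (setT `*` Cs k.+1 (2 ^ k) : set (IZ * IN)) by apply: mX => //; exact: Cs_meas.
have e1 : setT `*` A0 k = (setT `*` A0 k.+1) `|` (setT `*` Cs k.+1 (2 ^ k)) :> set (IZ * IN).
  apply/seteqP; split => -[x a] /=; rewrite !A0_Cs.
  - by move=> [_] /(Cs_split a k0); rewrite add0n; case; [left|right].
  - by case=> -[_ h]; split => //; apply/(Cs_split a k0); rewrite add0n; [left|right].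
have dj : (setT `*` A0 k.+1) `&` (setT `*` Cs k.+1 (2 ^ k)) = set0 :> set (IZ * IN).
  apply/seteqP; split => -[x a] //= [[_ h1] [_ h2]]; move: h1; rewrite A0_rk.
  by rewrite /Cs /= in h2; rewrite h2; lia.
have e2 : (setT `*` A0 k) `&` E =
   ((setT `*` A0 k.+1) `&` E) `|` ((setT `*` Cs k.+1 (2 ^ k)) `&` E).
  by rewrite e1 setIUl.
have h : ck k * xk k = ck k.+1 * xk k.
  rewrite {1}/ck divfK ?gt_eqF // e2 fine_nuU; last 3 first.
  - exact: measurableI.
  - exact: measurableI.
  - apply/seteqP; split => -[x a] //= [[[_ h1] _] [[_ h2] _]]; move: h1; rewrite A0_rk.
    by rewrite /Cs /= in h2; rewrite h2; lia.
  rewrite (propA (leqW nk) measurableT) (propC (2 ^ k) (leqW nk) measurableT).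
  by rewrite -mulrDr -fine_nuU // -e1.
by apply/esym; apply: (mulIf _ h); rewrite gt_eqF.
Qed.

Lemma ck_const k : (n <= k)%N -> ck k = ck n.
Proof.
move=> /subnKC <-; elim: (k - n)%N => [|m IH]; first by rewrite addn0.
by rewrite addnS ck_succ // leq_addr.
Qed.

Lemma Cs_I k k' r r' : (k <= k')%N ->
  Cs k r `&` Cs k' r' = Cs k' (if (r' %% 2 ^ k == r)%N then r' else 2 ^ k')%N.
Proof.
move=> kk; have hm a : rk k a = (rk k' a %% 2 ^ k)%N.
  by have := rk_mod k (k' - k) a; rewrite subnKC.
apply/seteqP; split => a /=; rewrite /Cs /=.
- by move=> [h1 h2]; rewrite hm h2 in h1; rewrite h1 eqxx.
- case: eqP => [e h|_ h]; first by rewrite hm h e.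
  by have := rk_lt k' a; rewrite h; lia.
Qed.

Lemma erg31_main : (nu E = 0%E) \/ (nu E = 1%E).
Proof.
pose cn := ck n.
have cn0 : 0 <= cn.
  apply: divr_ge0; first by apply: fine_ge0; exact: measure_ge0.
  exact: ltW (X0_pos hnu n).
pose G := [set Y : set (IZ * IN) | exists A k r,
  [/\ measurable A, (n <= k)%N & Y = A `*` Cs k r]].
pose m1 := mrestr nu mE.
pose m2 := mscale (NngNum cn0) nu.
have key Y : G Y -> m1 Y = m2 Y.
  move=> [A [k [r [mA nk ->]]]]; rewrite /m1 /m2 /mrestr /mscale /=.
  have mY : measurable (A `*` Cs k r : set (IZ * IN)) by apply: mX => //; exact: Cs_meas.
  rewrite -(fineK (finnu (measurableI _ _ mY mE))) -(fineK (finnu mY)) -EFinM.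
  by rewrite propC // ck_const.
have setIG : setI_closed G.
  move=> _ _ [A [k [r [mA nk ->]]]] [A' [k' [r' [mA' nk' ->]]]].
  rewrite -setXI; case: (leqP k k') => kk.
  - exists (A `&` A'), k', (if (r' %% 2 ^ k == r)%N then r' else 2 ^ k')%N.
    by split => //; [exact: measurableI|rewrite Cs_I].
  - exists (A `&` A'), k, (if (r %% 2 ^ k' == r')%N then r else 2 ^ k)%N.
    split => //; [exact: measurableI|]. rewrite [Cs k r `&` _]setIC Cs_I //; exact: ltnW.
have Gg i : G (setT `*` Cs n i) by exists setT, n, i.
have cover : \bigcup_i (setT `*` Cs n i) = setT :> set (IZ * IN).
  by apply/seteqP; split => -[x a] // _; exists (rk n a).
have fin i : (m1 (setT `*` Cs n i) < +oo)%E.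
  rewrite /m1 /mrestr ltey_eq fin_num_measure //.
  by apply: measurableI => //; apply: mX => //; exact: Cs_meas.
have mG : measurable = <<s G >>.
  apply/seteqP; split; last first.
    apply: smallest_sub; first exact: sigma_algebra_measurable.
    by move=> _ [A [k [r [mA _ ->]]]]; apply: mX => //; exact: Cs_meas.
  rewrite measurable_prod_measurableType.
  have sG : sigma_algebra setT <<s G >> := @sigma_algebra_measurable _ (g_sigma_algebraType G).
  have [sG0 sGC sGU] := sG.
  have GsG Y : G Y -> <<s G >> Y by move=> hY; exact: sub_sigma_algebra.
  have sGD X Y : <<s G >> X -> <<s G >> Y -> <<s G >> (X `\` Y).
    by move=> hX hY; exact: (@measurableD _ (g_sigma_algebraType G) X Y hX hY).
  apply: smallest_sub => //.
  move=> _ [A mA [B mB <-]].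
  have hAT : <<s G >> (A `*` setT).
    have -> : A `*` setT = \bigcup_r (A `*` Cs n r).
      by apply/seteqP; split => -[x a] /=; [move=> [hx _]; exists (rk n a)|move=> [r _ []]].
    by apply: sGU => r; apply: GsG; exists A, n, r.
  pose F := [set B : set IN | <<s G >> (A `*` B)].
  suff : <<s cylN >> `<=` F by apply.
  apply: smallest_sub.
  - split.
    + by rewrite /F /= setX0.
    + move=> B' hB'; rewrite /F /=.
      have -> : A `*` (setT `\` B') = (A `*` setT) `\` (A `*` B').
        by apply/seteqP; split => -[x a] /=; [move=> [hx [_ hb]]; split => // -[]|move=> [[hx _] hb]; split => //; split => // hb'; exact: hb].
      exact: sGD.
    + move=> Bs hBs; rewrite /F /=.
      have -> : A `*` \bigcup_k Bs k = \bigcup_k (A `*` Bs k).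
        by apply/seteqP; split => -[x a] /=; [move=> [hx [k _ hk]]; exists k|move=> [k _ [hx hk]]; split => //; exists k].
      exact: sGU.
  - move=> _ [i [b ->]]; rewrite /F /=.
    pose m := maxn i.+1 n.
    have im : (i < m)%N by rewrite leq_maxl.
    have -> : A `*` [set x : IN | x i = b] =
        \bigcup_r (if odd (r %/ 2 ^ i) == b then A `*` Cs m r else set0).
      apply/seteqP; split => -[x a] /=.
      * move=> [hx hb]; exists (rk m a) => //; rewrite -rk_bit // hb eqxx.
        by split.
      * move=> [r _]; case: eqP => // hr [hx hc]; split => //.
        by rewrite (rk_bit a im); move: hc; rewrite /Cs /= => ->.
    apply: sGU => r; case: ifP => _; last exact: sG0.
    by apply: GsG; exists A, m, r; split => //; exact: leq_maxr.
have U := measure_unique G (fun i => setT `*` Cs n i) mG setIG Gg cover m1 m2 key fin.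
have hE := U E mE; have hT := U setT measurableT.
change (nu (E `&` E) = (cn%:E * nu E)%E) in hE.
change (nu (setT `&` E) = (cn%:E * nu setT)%E) in hT.
rewrite setIid in hE.
rewrite setTI probability_setT mule1 in hT.
rewrite hT in hE *.
move: hE => /eqP; rewrite -EFinM eqe => /eqP hc.
have : cn * (1 - cn) == 0 by rewrite mulrBr mulr1 -hc subrr.
rewrite mulf_eq0 => /orP[/eqP h|]; first by left; rewrite h.
by rewrite subr_eq0 => /eqP h; right; rewrite -h.
Qed.

End erg31.

End file_G.
End Aux.
Import Aux.
Local Open Scope classical_set_scope.
Local Open Scope ring_scope.

Theorem lemma3 (R : realType) (nu : probability (IZ * IN)%type R) :
  in_M nu ->
  [<-> ergodic_for nu SxO;
       forall k : nat, ergodic_for (theta nu k) (iter (2 ^ k) shiftZ);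
       exists n : nat, forall k : nat, (n <= k)%N ->
         ergodic_for (theta nu k) (iter (2 ^ k) shiftZ)].
Proof.
move=> hnu; tfae.
- exact: erg12 hnu.
- by move=> h; exists 0%N => k _; exact: h.
- move=> [n Hn]; split; first exact: hnu.
  move=> E0 mE Einv; exact: (erg31_main hnu Hn mE Einv).
Qed.
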